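(* Let $\mathcal B$ be finite, $r,\tilde r:\mathcal B\to\mathbb R$, $\nu\in\Delta(\mathcal B)$ with $\nu(b)>0$ for all $b$, and $\varepsilon\ge0$. Suppose $\inf_{\xi\in\mathbb R}\langle\nu,|r-\tilde r-\xi\mathbf 1|\rangle_{\mathcal B}\le\varepsilon$ and $\langle x,r-\tilde r\rangle_{\mathcal B}=0$ for some $x:\mathcal B\to\mathbb R$ with $\langle\mathbf 1,x\rangle_{\mathcal B}\ne0$. Then $$\langle\nu,|r-\tilde r|\rangle_{\mathcal B}\le\Bigl(1+\Bigl\|\frac x\nu\Bigr\|_\infty\cdot\frac1{|\langle x,\mathbf 1\rangle_{\mathcal B}|}\Bigr)\varepsilon.$$
   Context: $\langle f,g\rangle_{\mathcal B}=\sum_bf(b)g(b)$; $x/\nu$ is the entrywise ratio; $\mathbf 1$ is the all-ones function. *)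

(* Defs.v *)
From HB Require Import structures.
From mathcomp Require Import all_boot all_order all_algebra.
From mathcomp Require Import all_classical all_reals.
Set Implicit Arguments. Unset Strict Implicit. Unset Printing Implicit Defensive.
Import Order.TTheory GRing.Theory Num.Theory.
Local Open Scope ring_scope.

Definition ip (R : realType) (B : finType) (f g : B -> R) : R :=
  \sum_(b : B) f b * g b.

Definition supnorm (R : realType) (B : finType) (f : B -> R) : R :=
  \big[Num.max/0]_(b : B) `|f b|.

Definition is_distr (R : realType) (B : finType) (nu : B -> R) : Prop :=
  (forall b, 0 <= nu b) /\ \sum_(b : B) nu b = 1.

(* Main.v *)
Require Import Defs.
From HB Require Import structures.
From mathcomp Require Import all_boot all_order all_algebra.
From mathcomp Require Import all_classical all_reals.
From mathcomp Require Import ring.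
Import Order.TTheory GRing.Theory Num.Theory.
Local Open Scope ring_scope.
Local Open Scope classical_set_scope.

Lemma bigmax_seq_ge (R : realType) (T : eqType) (F : T -> R) (s : seq T) :
  0 <= \big[Num.max/0]_(i <- s) `|F i| /\
  forall j, j \in s -> `|F j| <= \big[Num.max/0]_(i <- s) `|F i|.
Proof.
elim: s => [|a s [IH0 IH]]; first by rewrite big_nil; split => // j.
rewrite big_cons; split; first by rewrite le_max IH0 orbT.
move=> j; rewrite in_cons => /orP [/eqP ->|js]; first by rewrite le_max lexx.
by rewrite le_max (IH j js) orbT.
Qed.

Theorem mainTheorem14 (R : realType) (B : finType) (r rt nu x : B -> R) (eps : R) :
  is_distr nu -> (forall b, 0 < nu b) -> 0 <= eps ->
  inf [set ip nu (fun b => `|r b - rt b - xi|) | xi in [set: R]] <= eps ->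
  ip x (fun b => r b - rt b) = 0 ->
  ip (fun _ => 1) x != 0 ->
  ip nu (fun b => `|r b - rt b|)
    <= (1 + supnorm (fun b => x b / nu b) * (1 / `|ip x (fun _ => 1)|)) * eps.
Proof.
move=> [nu0 nu1] nupos eps0 Hinf Hx Hc.
set S := supnorm _.
have [S0 HS] := @bigmax_seq_ge R B (fun b => x b / nu b) (index_enum B).
have HSb : forall b, `|x b / nu b| <= S by move=> b; apply: HS; rewrite mem_index_enum.
set c := ip x (fun _ => 1).
have cE : c = ip (fun _ => 1) x by rewrite /c /ip; apply: eq_bigr => b _; rewrite mulrC.
have cpos : 0 < `|c| by rewrite normr_gt0 cE.
set K := S * (1 / `|c|).
have K0 : 0 <= K by rewrite /K mulr_ge0 // divr_ge0.
set L := ip nu (fun b => `|r b - rt b|).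
suff : L / (1 + K) <= eps.
  have K1 : 0 < 1 + K by rewrite ltr_pwDl.
  by rewrite ler_pdivrMr // mulrC.
apply: le_trans Hinf; apply: lb_le_inf.
  by exists (ip nu (fun b => `|r b - rt b - 0|)); exists 0.
move=> _ [xi _ <-].
set f := ip nu _.
have H1 : `|xi| * `|c| <= S * f.
  have e : xi * c = ip x (fun b => r b - rt b) - ip x (fun b => r b - rt b - xi).
    rewrite /ip /c -sumrB mulr_sumr; apply: eq_bigr => b _; ring.
  rewrite Hx sub0r in e.
  rewrite -normrM e normrN /f /ip mulr_sumr.
  apply: le_trans (ler_norm_sum _ _ _) _; apply: ler_sum => b _.
  have hnu : x b = (x b / nu b) * nu b by rewrite divfK // gt_eqF.
  rewrite {1}hnu (normrM (x b / nu b * nu b)) (normrM (x b / nu b)) (gtr0_norm (nupos b)) mulrA.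
  apply: ler_wpM2r; first by rewrite normr_ge0.
  by apply: ler_wpM2r => //; apply: HSb.
have H2 : L <= f + `|xi|.
  rewrite /L /f /ip -[X in _ + X]mul1r -nu1 mulr_suml -big_split /=.
  apply: ler_sum => b _; rewrite -mulrDr ler_wpM2l //.
  by rewrite -[X in `|X|](subrK xi) ler_normD.
have H3 : `|xi| <= K * f.
  by rewrite /K mul1r mulrAC ler_pdivlMr.
have K1 : 0 < 1 + K by rewrite ltr_pwDl.
rewrite ler_pdivrMr // mulrDr mulr1 mulrC.
by apply: le_trans H2 _; rewrite lerD2l.
Qed.
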